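(* Let $\phi=\frac{1+\sqrt5}{2}$ and let $n\ge 2$ be an integer. Let $G$ be a bipartite multigraph consisting of $n$ matchings $M_1,\dots,M_n$ (not necessarily edge-disjoint), each with at least $\phi n+20n/\log n$ edges. Then $G$ contains a rainbow matching with $n$ edges.
   Context: $\log$ denotes the natural logarithm. Each matching $M_i$ is a colour class (colour $i$); if the same pair of vertices is an edge of several $M_i$, these are treated as distinct parallel edges of different colours. A matching is rainbow if it contains at most one edge of each colour. *)

(* Defs.v *)
From mathcomp Require Import all_boot.
From Stdlib Require Import Reals.
Set Implicit Arguments. Unset Strict Implicit. Unset Printing Implicit Defensive.

(* A bipartite multigraph with parts A and B (finite vertex types) and n colour
   classes; colour class i is the set of edges M i : {set A * B}, each edge
   being a pair (a, b) with a in part A and b in part B. Edges of different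
   colours on the same pair of vertices are distinct (parallel) edges. *)

Definition is_matching (A B : finType) (M : {set A * B}) : Prop :=
  forall e f, e \in M -> f \in M -> e != f -> (e.1 != f.1) /\ (e.2 != f.2).

Definition is_rainbow_matching (A B : finType) (n : nat)
  (M : 'I_n -> {set A * B}) (R : {set 'I_n * (A * B)}) : Prop :=
  (forall p, p \in R -> p.2 \in M p.1) /\
  (forall p q, p \in R -> q \in R -> p != q ->
     [/\ p.1 != q.1, p.2.1 != q.2.1 & p.2.2 != q.2.2]).

Definition golden_ratio : R := ((1 + sqrt 5) / 2)%R.

(* Main.v *)
Require Import Defs.
From mathcomp Require Import all_boot.
From Stdlib Require Import Reals.
From Stdlib Require Import ClassicalEpsilon Classical Lra Lia.
From mathcomp Require Import zify.
Set Implicit Arguments. Unset Strict Implicit. Unset Printing Implicit Defensive.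

Definition pb (P : Prop) : bool := if excluded_middle_informative P then true else false.
Lemma pbP P : reflect P (pb P).
Proof. rewrite /pb; case: excluded_middle_informative => H; by constructor. Qed.

Lemma cardsU_le (T : finType) (X Y : {set T}) : #|X :|: Y| <= #|X| + #|Y|.
Proof. by rewrite cardsU leq_subr. Qed.

Section Core.
Variables (A B : finType) (n : nat) (M : 'I_n -> {set A * B}).
Hypothesis Mm : forall i, is_matching (M i).

Lemma match_card1 i (S : {set A}) : #|[set e in M i | e.1 \in S]| <= #|S|.
Proof.
have inj : {in [set e in M i | e.1 \in S] &, injective fst}.
  move=> e f; rewrite !inE => /andP[eE _] /andP[fE _] ef.
  apply/eqP; apply/negPn/negP => ne.
  by have [] := Mm eE fE ne; rewrite ef eqxx.
rewrite -(card_in_imset inj); apply: subset_leq_card.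
by apply/subsetP => x /imsetP [e]; rewrite inE => /andP[_ ?] ->.
Qed.

Lemma match_card2 i (S : {set B}) : #|[set e in M i | e.2 \in S]| <= #|S|.
Proof.
have inj : {in [set e in M i | e.2 \in S] &, injective snd}.
  move=> e f; rewrite !inE => /andP[eE _] /andP[fE _] ef.
  apply/eqP; apply/negPn/negP => ne.
  by have [] := Mm eE fE ne; rewrite ef eqxx.
rewrite -(card_in_imset inj); apply: subset_leq_card.
by apply/subsetP => x /imsetP [e]; rewrite inE => /andP[_ ?] ->.
Qed.

Definition prb (h : 'I_n -> option (A * B)) : Prop :=
  (forall u e, h u = Some e -> e \in M u) /\
  (forall u v e f, u != v -> h u = Some e -> h v = Some f -> e.1 != f.1 /\ e.2 != f.2).
Definition dom (h : 'I_n -> option (A * B)) : {set 'I_n} := [set u | isSome (h u)].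
Definition freeA (h : 'I_n -> option (A * B)) (x : A) := forall u e, h u = Some e -> e.1 != x.
Definition freeB (h : 'I_n -> option (A * B)) (y : B) := forall u e, h u = Some e -> e.2 != y.

Lemma aug h v e : prb h -> h v = None -> e \in M v -> freeA h e.1 -> freeB h e.2 ->
  prb (fun w => if w == v then Some e else h w) /\
  #|dom (fun w => if w == v then Some e else h w)| = #|dom h|.+1.
Proof.
move=> [hM hD] hv eM fa fb; split; first split.
- move=> u f; case: (eqVneq u v) => [-> [<-] //|_ /hM] //.
- move=> u w f f' uw.
  have [Eu|uv] := eqVneq u v; have [Ew|wv] := eqVneq w v.
  + by move: uw; rewrite Eu Ew eqxx.
  + by move=> [<-] hw; split; rewrite eq_sym; [apply: fa hw | apply: fb hw].
  + by move=> hu [<-]; split; [apply: fa hu | apply: fb hu].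
  + exact: hD.
- have -> : dom (fun w => if w == v then Some e else h w) = v |: dom h.
    by apply/setP => w; rewrite !inE; case: eqP.
  by rewrite cardsU1 inE hv.
Qed.

Lemma prb_none : prb (fun _ => None).
Proof. by split. Qed.

Variable g : 'I_n -> option (A * B).
Hypothesis gr : prb g.
Variable e0 : A * B.
Variable c : 'I_n.
Hypothesis gc : g c = None.
Hypothesis noaug : forall h, prb h -> #|dom h| = #|dom g|.+1 -> False.

Definition C := dom g.
Definition k := #|C|.
Definition ga u := (odflt e0 (g u)).1.
Definition gb u := (odflt e0 (g u)).2.
Definition VA := [set ga u | u in C].
Definition VB := [set gb u | u in C].

Lemma gC u : u \in C -> g u = Some (ga u, gb u).
Proof. by rewrite /C /dom inE /ga /gb; case: (g u) => // -[]. Qed.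

Lemma cC : c \notin C.
Proof. by rewrite /C /dom inE gc. Qed.

Lemma VA_free x : x \notin VA -> freeA g x.
Proof.
move=> xV u e gu; apply/eqP => ex; move/negP: xV; apply; apply/imsetP; exists u.
  by rewrite /C /dom inE gu.
by rewrite /ga gu.
Qed.

Lemma VB_free y : y \notin VB -> freeB g y.
Proof.
move=> yV u e gu; apply/eqP => ey; move/negP: yV; apply; apply/imsetP; exists u.
  by rewrite /C /dom inE gu.
by rewrite /gb gu.
Qed.

Lemma noaug_edge h v e : prb h -> #|dom h| = k -> h v = None -> e \in M v ->
  freeA h e.1 -> freeB h e.2 -> False.
Proof.
move=> hr hk hv eM fa fb; have [r2 k2] := aug hr hv eM fa fb.
by apply: (noaug r2); rewrite k2 hk.
Qed.

Definition Reach (v : 'I_n) (W : {set A}) (T : {set 'I_n}) : Prop :=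
  exists h, [/\ prb h, #|dom h| = k, h v = None,
     (forall w, w \in C -> w \notin T -> h w = g w) &
     (forall x, x \notin VA -> x \notin W -> freeA h x)] /\
   [/\ (forall w, w \in T -> freeA h (ga w)),
     (forall y, y \notin VB -> freeB h y),
     (v == c) || (v \in T) & T \subset C].

Lemma reach0 : Reach c set0 set0.
Proof.
exists g; split; split.
- exact: gr.
- by [].
- exact: gc.
- by [].
- by move=> x xV _; apply: VA_free.
- by move=> w; rewrite inE.
- by move=> y yV; apply: VB_free.
- by rewrite eqxx.
- by apply/subsetP => x; rewrite inE.
Qed.

Lemma reach_step u W T v x : Reach u W T -> v \in C -> v \notin T -> x \notin VA -> x \notin W ->
  (x, gb v) \in M u -> Reach v (x |: W) (v |: T).
Proof.
move=> [h [[[hM hD] hk hu hg hW] [hT hB uT TC]]] vC vT xV xW xM.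
have uv : u != v.
  apply/eqP => E; move: uT; rewrite E; case/orP => [/eqP Ec | //]; last by rewrite (negbTE vT).
  by move: vC; rewrite Ec (negbTE cC).
have hv : h v = Some (ga v, gb v) by rewrite hg // gC.
pose h' := fun w => if w == v then None else if w == u then Some (x, gb v) else h w.
have fx : freeA h x by apply: hW.
exists h'; split; split.
- split.
  + move=> w f; rewrite /h'; case: eqP => // _; case: eqP => [-> [<-] // | _]; exact: hM.
  + move=> w1 w2 f1 f2 w12; rewrite /h'.
    have [//|w1v] := eqVneq w1 v; have [//|w2v] := eqVneq w2 v.
    have [E1|w1u] := eqVneq w1 u; have [E2|w2u] := eqVneq w2 u.
    * by move: w12; rewrite E1 E2 eqxx.
    * move=> [<-] h2 /=; split; first by rewrite eq_sym; apply: (fx w2 f2 h2).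
      have vw : v != w2 by rewrite eq_sym w2v.
      by have [_ /= H] := hD v w2 _ _ vw hv h2.
    * move=> h1 [<-] /=; split; first by apply: (fx w1 f1 h1).
      have vw : v != w1 by rewrite eq_sym w1v.
      by have [_ /= H] := hD v w1 _ _ vw hv h1; rewrite eq_sym.
    * exact: (hD _ _ _ _ w12).
- have -> : dom h' = (u |: dom h) :\ v.
    by apply/setP => w; rewrite !inE /h'; case: (w == v) => //=; case: (w == u).
  have vd : v \in u |: dom h by rewrite !inE hv orbT.
  by move: (cardsD1 v (u |: dom h)); rewrite vd cardsU1 inE hu /= hk add1n => -[].
- by rewrite /h' eqxx.
- move=> w wC; rewrite !inE negb_or => /andP[wv wT]; rewrite /h' (negbTE wv).
  have -> : (w == u) = false.
    apply/eqP => E; move: uT; rewrite -E; case/orP => [/eqP Ec | ]; last by rewrite (negbTE wT).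
    by move: wC; rewrite Ec (negbTE cC).
  exact: hg.
- move=> x' x'V; rewrite !inE negb_or => /andP[x'x x'W] w f; rewrite /h'.
  case: eqP => // _; case: eqP => [_ [<-] /= | _]; first by rewrite eq_sym.
  exact: hW.
- move=> w; rewrite !inE => wT' w' f; rewrite /h'.
  case: eqP => // w'v; case: eqP => [_ [<-] /= | w'u].
  + apply/eqP => E; move/negP: xV; apply; rewrite E; apply/imsetP; exists w => //.
    case/orP: wT' => [/eqP -> // | wT]; exact: (subsetP TC).
  + case/orP: wT' => [/eqP -> | wT].
    * move=> h1; have := hD v w' _ _ _ hv h1; rewrite eq_sym.
      by move/eqP: w'v => -> /(_ isT) [+ _]; rewrite eq_sym.
    * exact: hT.
- move=> y yV w f; rewrite /h'; case: eqP => // _; case: eqP => [_ [<-] /= | _].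
  + apply/eqP => E; move/negP: yV; apply; rewrite -E; apply/imsetP; by exists v.
  + exact: hB.
- by rewrite !inE eqxx orbT.
- by apply/subsetP => w; rewrite in_setU1 => /orP [/eqP -> // | /(subsetP TC)].
Qed.


Lemma reach_inv v W T : Reach v W T -> ((v == c) || (v \in T)) /\ T \subset C.
Proof. by move=> [h [_ [_ _ I1 I2]]]. Qed.

Lemma reach_noXX v W T e : Reach v W T -> e \in M v -> e.1 \notin VA -> e.1 \notin W ->
  e.2 \notin VB -> False.
Proof.
move=> [h [[hr hk hv _ hW] [_ hB _ _]]] eM a1 a2 b2.
exact: (noaug_edge hr hk hv eM (hW _ a1 a2) (hB _ b2)).
Qed.

Lemma reach_noT v W T w e : Reach v W T -> w \in T -> e \in M v -> e.1 = ga w ->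
  e.2 \notin VB -> False.
Proof.
move=> [h [[hr hk hv _ hW] [hT hB _ _]]] wT eM a1 b2.
by apply: (noaug_edge hr hk hv eM _ (hB _ b2)); rewrite a1; apply: hT.
Qed.

Definition Out u (W : {set A}) (T : {set 'I_n}) := [set v | (v \in C) && (v \notin T) &&
   [exists x, (x \notin VA) && (x \notin W) && ((x, gb v) \in M u)]].

Lemma out_bound u W T : Reach u W T -> #|M u| <= k + #|W| + #|T| + #|Out u W T|.
Proof.
move=> Ru.
have sub : M u \subset ([set e in M u | e.1 \in VA] :|: [set e in M u | e.1 \in W]) :|:
   ([set e in M u | e.2 \in gb @: T] :|: [set e in M u | e.2 \in gb @: Out u W T]).
  apply/subsetP => e eM; rewrite !in_setU !in_set eM /=.
  have [//|a1] := boolP (e.1 \in VA); have [//|a2] := boolP (e.1 \in W).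
  have [eVB|b2] := boolP (e.2 \in VB); last by case: (reach_noXX Ru eM a1 a2 b2).
  case/imsetP: eVB => w wC ew.
  have [wT|wT] := boolP (w \in T); first by rewrite ew imset_f.
  have wO : w \in Out u W T.
    rewrite /Out inE wC wT /=; apply/existsP; exists e.1.
    by rewrite a1 a2 /= -ew; case: e eM {ew a1 a2}.
  by rewrite ew (imset_f gb wO) ?orbT.
have cVA : #|VA| <= k by apply: leq_imset_card.
have c1 := match_card1 u VA; have c2 := match_card1 u W.
have c3 := match_card2 u (gb @: T); have c4 := match_card2 u (gb @: Out u W T).
have c5 := leq_imset_card gb T; have c6 := leq_imset_card gb (Out u W T).
have := subset_leq_card sub.
have u1 := cardsU_le [set e in M u | e.1 \in VA] [set e in M u | e.1 \in W].
have u2 := cardsU_le [set e in M u | e.2 \in gb @: T] [set e in M u | e.2 \in gb @: Out u W T].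
have u3 := cardsU_le ([set e in M u | e.1 \in VA] :|: [set e in M u | e.1 \in W])
   ([set e in M u | e.2 \in gb @: T] :|: [set e in M u | e.2 \in gb @: Out u W T]).
move=> S.
apply: (leq_trans S); apply: (leq_trans u3); rewrite -addnA; apply: leq_add.
- apply: (leq_trans u1); apply: leq_add; [exact: leq_trans c1 cVA | exact: c2].
- apply: (leq_trans u2); apply: leq_add; [exact: leq_trans c3 c5 | exact: leq_trans c4 c6].
Qed.

Definition good d u v := exists W T x, [/\ Reach u W T, #|W| <= d, #|T| <= d, v \in C & v \notin T]
   /\ [/\ x \notin VA, x \notin W & (x, gb v) \in M u].

Lemma good_reach d u v : good d u v ->
  exists W T, [/\ Reach v W T, #|W| <= d.+1, #|T| <= d.+1 & (u \in C -> u \in T)].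
Proof.
move=> [W [T [x [[Ru hW hT vC vT] [xV xW xM]]]]].
exists (x |: W), (v |: T); split.
- exact: reach_step Ru vC vT xV xW xM.
- by rewrite cardsU1; case: (x \notin W) => /=; lia.
- by rewrite cardsU1 vT add1n; lia.
- move=> uC; have [/orP [/eqP uc | uT] _] := reach_inv Ru.
  + by move: uC; rewrite uc (negbTE cC).
  + by rewrite in_setU1 uT orbT.
Qed.

Lemma good_uc d u v : good d u v -> u \notin C -> u = c.
Proof.
move=> [W [T [x [[Ru _ _ _ _] _]]]] uC.
have [/orP [/eqP // | uT] TC] := reach_inv Ru.
by move: uC; rewrite (subsetP TC _ uT).
Qed.

Lemma in_bound d v : (exists u0, good d u0 v) ->
  #|[set u | pb (good d u v)]| + #|M v| <= 2 * k + d + 2.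
Proof.
case=> u0 /good_reach [W' [T' [R' hW' _ _]]].
set I := [set u | pb (good d u v)].
set G := C :&: I.
have hI : I \subset c |: G.
  apply/subsetP => u; rewrite inE => /pbP gu.
  rewrite !in_setU1 in_setI.
  have [uC|uC] := boolP (u \in C); first by rewrite inE; apply/orP; right; apply/pbP.
  by rewrite (good_uc gu uC) eqxx.
have cI : #|I| <= #|G| + 1.
  by apply: leq_trans (subset_leq_card hI) _; rewrite cardsU1 addnC leq_add2l leq_b1.
have sub : M v \subset ([set e in M v | e.2 \in VB] :|: [set e in M v | e.1 \in W']) :|:
   [set e in M v | e.1 \in ga @: (C :\: G)].
  apply/subsetP => e eM; rewrite !in_setU !in_set eM /=.
  have [//|b2] := boolP (e.2 \in VB).
  have [eVA|a1] := boolP (e.1 \in VA).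
  - case/imsetP: eVA => w wC ew.
    have [wG|wG] := boolP (w \in G).
    + move: wG; rewrite in_setI => /andP [_]; rewrite /I inE => /pbP gw.
      have [W'' [T'' [R'' _ _ wT]]] := good_reach gw.
      by case: (reach_noT R'' (wT wC) eM ew b2).
    + by rewrite ew imset_f ?orbT // in_setD wG wC.
  - have [//|a2] := boolP (e.1 \in W').
    by case: (reach_noXX R' eM a1 a2 b2).
have cVB : #|VB| <= k by apply: leq_imset_card.
have c1 := match_card2 v VB; have c2 := match_card1 v W'.
have c3 := match_card1 v (ga @: (C :\: G)).
have c4 := leq_imset_card ga (C :\: G).
have cG : #|G| + #|C :\: G| = k.
  have := cardsID G C; rewrite /G setIA setIid => ->; done.
have u1 := cardsU_le [set e in M v | e.2 \in VB] [set e in M v | e.1 \in W'].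
have u2 := cardsU_le ([set e in M v | e.2 \in VB] :|: [set e in M v | e.1 \in W'])
   [set e in M v | e.1 \in ga @: (C :\: G)].
have S : #|M v| <= k + d.+1 + #|C :\: G|.
  apply: (leq_trans (subset_leq_card sub)); apply: (leq_trans u2); apply: leq_add.
  - apply: (leq_trans u1); apply: leq_add; [exact: leq_trans c1 cVB | exact: leq_trans c2 hW'].
  - exact: leq_trans c3 c4.
lia.
Qed.

Variable s : nat.
Hypothesis Ms : forall i, s <= #|M i|.

Definition Rs d := [set u | pb (exists W T, [/\ Reach u W T, #|W| <= d & #|T| <= d])].

Lemma card_sum (S : {set 'I_n}) : #|S| = \sum_v (v \in S : nat).
Proof. by rewrite -sum1_card big_mkcond; apply: eq_bigr => i _; case: (i \in S). Qed.

Lemma growth d : #|Rs d| * (s - k - 2 * d) <= #|Rs d.+1| * (2 * k + d + 2 - s).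
Proof.
have L1 : #|Rs d| * (s - k - 2 * d) <= \sum_u #|[set v | pb (good d u v)]|.
  rewrite -sum_nat_const big_mkcond; apply: leq_sum => u _.
  case: ifP => //; rewrite inE => /pbP [W [T [Ru hW hT]]].
  have := out_bound Ru; have := Ms u.
  have : #|Out u W T| <= #|[set v | pb (good d u v)]|.
    apply: subset_leq_card; apply/subsetP => v; rewrite !inE => /andP [/andP [vC vT] /existsP [x /andP [/andP [xV xW] xM]]].
    by apply/pbP; exists W, T, x; split; split => //; rewrite /C /dom inE.
  lia.
have L2 : \sum_u #|[set v | pb (good d u v)]| = \sum_v #|[set u | pb (good d u v)]|.
  under eq_bigr => u _ do rewrite card_sum.
  rewrite exchange_big /=; apply: eq_bigr => v _; rewrite card_sum.
  by apply: eq_bigr => u _; rewrite !inE.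
have L3 : \sum_v #|[set u | pb (good d u v)]| <= #|Rs d.+1| * (2 * k + d + 2 - s).
  rewrite -sum_nat_const [X in _ <= X]big_mkcond /=; apply: leq_sum => v _.
  case: (classic (exists u0, good d u0 v)) => [ex | nex].
  - have := in_bound ex; have := Ms v.
    case: ex => u0 /good_reach [W [T [Rv hW hT _]]].
    have -> : v \in Rs d.+1 by rewrite inE; apply/pbP; exists W, T.
    move=> H1 H2; apply: leq_trans _ (leq_sub2r s H2); by rewrite -addnBA // leq_addr.
  - have -> : [set u | pb (good d u v)] = set0.
      by apply/setP => u; rewrite !inE; apply/negbTE/negP => /pbP gu; apply: nex; exists u.
    by rewrite cards0.
lia.
Qed.

Lemma c_R0 : c \in Rs 0.
Proof. by rewrite inE; apply/pbP; exists set0, set0; split; [exact: reach0 | rewrite cards0 | rewrite cards0]. Qed.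

Lemma Rs_card d : #|Rs d| <= n.
Proof. by apply: leq_trans (max_card _) _; rewrite card_ord. Qed.

Lemma core_false L : 8 * n + 14 * L + 12 <= 5 * s -> n + 4 * L + 5 <= s ->
  n < expn 2 L.+1 -> k < n -> False.
Proof.
move=> H1 H2 HL Hk.
set D := 2 * L + 2.
set p := s - k - 2 * D. set q := 2 * k + D + 2 - s.
have p1 : 1 <= p by rewrite /p /D; lia.
have pq : 3 * q <= 2 * p by rewrite /p /q /D; lia.
have grow : forall d, d < D -> #|Rs d| * p <= #|Rs d.+1| * q.
  move=> d dD.
  apply: leq_trans (_ : #|Rs d| * p <= #|Rs d| * (s - k - 2 * d)) _.
    by apply: leq_mul => //; rewrite /p; lia.
  apply: leq_trans (growth d) _; apply: leq_mul => //; rewrite /q; lia.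
have ind : forall d, d <= D -> expn 3 d <= expn 2 d * #|Rs d|.
  elim=> [_ | d IH dD].
  - by rewrite !expn0 mul1n; apply/card_gt0P; exists c; exact: c_R0.
  - have IH' := IH (ltnW dD).
    have pos : 0 < #|Rs d|.
      by move: IH'; rewrite leqNgt; apply: contraR; rewrite -eqn0Ngt => /eqP ->; rewrite muln0 expn_gt0.
    have gd := grow d dD.
    have k3 : 3 * #|Rs d| <= 2 * #|Rs d.+1|.
      have [q0|qp] := posnP q.
        by move: gd; rewrite q0 muln0 leqn0 muln_eq0; move: pos p1; lia.
      rewrite -(leq_pmul2r qp); apply: leq_trans (_ : 2 * (#|Rs d| * p) <= _).
        by move: pq; nia.
      by move: gd; nia.
    rewrite !expnS; apply: leq_trans (_ : 3 * (expn 2 d * #|Rs d|) <= _).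
      by rewrite leq_mul2l.
    by move: k3; nia.
have := ind D (leqnn D).
have Rn := Rs_card D.
have : expn 2 D * n < expn 3 D.
  have eD : D = 2 * L.+1 by rewrite /D; lia.
  have e1 : expn 3 D = expn 9 L.+1 by rewrite eD expnM.
  have e2 : expn 2 D = expn 4 L.+1 by rewrite eD expnM.
  rewrite e1 e2; apply: leq_trans (_ : expn 4 L.+1 * expn 2 L.+1 <= _).
    by rewrite ltn_pmul2l // expn_gt0.
  by rewrite -expnMn leq_exp2r.
move=> H3 H4.
have : expn 2 D * #|Rs D| <= expn 2 D * n by rewrite leq_mul2l Rn orbT.
lia.
Qed.

End Core.

Lemma sq_le (L : nat) : (L + 1) * (L + 1) <= 4 * expn 2 L.
Proof.
elim: L => [//|L IH].
have h1 : L.+1 < expn 2 L.+1 by apply: ltn_expl.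
rewrite expnS; move: h1; rewrite expnS => h1.
nia.
Qed.

Lemma INR_expn2 m : (INR (expn 2 m) <= exp (INR m))%R.
Proof.
elim: m => [|m IH]; first by rewrite expn0 /= exp_0; lra.
rewrite expnS -multE mult_INR (S_INR m) exp_plus.
have e1 : (2 < exp 1)%R by have := exp_ineq1 1; lra.
have p : (0 <= INR (expn 2 m))%R by apply: pos_INR.
simpl INR at 1.
nra.
Qed.

Lemma real_bounds (n m L : nat) : 2 <= n -> expn 2 L <= n -> n < expn 2 L.+1 ->
  (golden_ratio * INR n + 20 * INR n / ln (INR n) <= INR m)%R ->
  8 * n + 14 * L + 12 <= 5 * m /\ n + 4 * L + 5 <= m.
Proof.
move=> n2 hL hL' H.
have sq := sq_le L.
have NA : (14 * L + 12) * (L + 1) <= 100 * n by nia.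
have NB : (4 * L + 5) * (L + 1) <= 20 * n by nia.
have NA' : (INR ((14 * L + 12) * (L + 1)) <= INR (100 * n))%R by apply: le_INR; apply/leP.
have NB' : (INR ((4 * L + 5) * (L + 1)) <= INR (20 * n))%R by apply: le_INR; apply/leP.
rewrite -!multE -!plusE !mult_INR !plus_INR in NA' NB'.
have x2 : (2 <= INR n)%R by have := le_INR 2 n (elimT leP n2); simpl INR.
have lnp : (0 < ln (INR n))%R by rewrite -ln_1; apply: ln_increasing; lra.
have lnL : (ln (INR n) < INR L + 1)%R.
  have h1 : (INR n < INR (expn 2 L.+1))%R by apply: lt_INR; apply/ltP.
  have h2 := INR_expn2 L.+1.
  rewrite -S_INR -[X in (_ < X)%R](ln_exp (INR L.+1)).
  apply: ln_increasing; lra.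
set y := (20 * INR n / ln (INR n))%R in H.
have yl : (y * ln (INR n) = 20 * INR n)%R by rewrite /y; field; lra.
have y0 : (0 <= y)%R by rewrite /y; apply: Rle_mult_inv_pos; lra.
have yL : (20 * INR n <= y * (INR L + 1))%R by nra.
have Lp : (0 < INR L + 1)%R by have := pos_INR L; lra.
have phi : (8 / 5 <= golden_ratio)%R.
  rewrite /golden_ratio.
  have : (11 / 5 <= sqrt 5)%R.
    rewrite -(sqrt_square (11 / 5)); last lra.
    apply: sqrt_le_1_alt; lra.
  lra.
have yA : (14 * INR L + 12 <= 5 * y)%R.
  apply: (Rmult_le_reg_r (INR L + 1)) => //.
  simpl INR in NA'; nra.
have yB : (4 * INR L + 5 <= y)%R.
  apply: (Rmult_le_reg_r (INR L + 1)) => //.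
  simpl INR in NB'; nra.
split; apply/leP; apply: INR_le; rewrite -!multE -!plusE ?mult_INR !plus_INR ?mult_INR; simpl INR;
  nra.
Qed.

Lemma exists_rb (A B : finType) (n : nat) (M : 'I_n -> {set A * B})
  (Mm : forall i, is_matching (M i)) L
  (H1 : forall i, 8 * n + 14 * L + 12 <= 5 * #|M i|)
  (H2 : forall i, n + 4 * L + 5 <= #|M i|) (HL : n < expn 2 L.+1) :
  forall m, m <= n -> exists h, prb M h /\ #|dom h| = m.
Proof.
elim=> [_|m IH Hm].
  exists (fun _ => None); split; first exact: prb_none.
  by apply/eqP; rewrite cards_eq0; apply/eqP/setP => u; rewrite !inE.
have [h [hr hk]] := IH (ltnW Hm).
case: (classic (exists h', prb M h' /\ #|dom h'| = m.+1)) => // nex.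
exfalso.
have /subsetPn [c _ cd] : ~~ ([set: 'I_n] \subset dom h).
  apply/negP => S; have := subset_leq_card S; rewrite cardsT card_ord hk => ?; lia.
have gc : h c = None by move: cd; rewrite inE; case: (h c).
have /card_gt0P [e0 _] : 0 < #|M c| by have := H2 c; lia.
have [i0 _ Hmin] := @arg_minnP _ c predT (fun i => #|M i|) isT.
have noaug : forall h', prb M h' -> #|dom h'| = #|dom h|.+1 -> False.
  by move=> h' h'r h'k; apply: nex; exists h'; rewrite h'k hk.
apply: (@core_false A B n M Mm h hr e0 c gc noaug #|M i0| (fun j => Hmin j isT) L).
- exact: H1.
- exact: H2.
- exact: HL.
- by rewrite /k /C hk.
Qed.

Theorem mainTheorem3 (A B : finType) (n : nat) (M : 'I_n -> {set A * B}) :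
  (2 <= n)%N ->
  (forall i, is_matching (M i)) ->
  (forall i, (golden_ratio * INR n + 20 * INR n / ln (INR n) <= INR #|M i|)%R) ->
  exists R : {set 'I_n * (A * B)}, is_rainbow_matching M R /\ #|R| = n.
Proof.
move=> n2 Mm HM.
set L := trunc_log 2 n.
have hL : expn 2 L <= n by apply: trunc_logP => //; lia.
have hL' : n < expn 2 L.+1 by apply: trunc_log_ltn.
have H12 := fun i => real_bounds n2 hL hL' (HM i).
have [h [[hM hD] hk]] := exists_rb Mm (fun i => proj1 (H12 i)) (fun i => proj2 (H12 i)) hL' (leqnn n).
exists [set p : 'I_n * (A * B) | h p.1 == Some p.2]; split; first split.
- by move=> p; rewrite inE => /eqP; apply: hM.
- move=> p q; rewrite !inE => /eqP hp /eqP hq pq.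
  have p1q1 : p.1 != q.1.
    apply/eqP => E; move/eqP: pq; apply.
    move: hq; rewrite -E hp => -[E2]; case: p q E E2 {hp} => [p1 p2] [q1 q2] /= -> ->.
    done.
  by have [? ?] := hD _ _ _ _ p1q1 hp hq; split.
- transitivity #|dom h|; last exact: hk.
  have inj : {in [set p : 'I_n * (A * B) | h p.1 == Some p.2] &, injective fst}.
    move=> p q; rewrite !inE => /eqP hp /eqP hq E.
    move: hq; rewrite -E hp => -[E2]; case: p q E E2 {hp} => [p1 p2] [q1 q2] /= -> ->.
    done.
  rewrite -(card_in_imset inj).
  suff -> : [set x.1 | x in [set p : 'I_n * (A * B) | h p.1 == Some p.2]] = dom h by [].
  apply/setP => u; rewrite [in RHS]inE.
  apply/imsetP/idP => [[p] | hu].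
    by rewrite inE => /eqP hp ->; rewrite hp.
  case E : (h u) hu => [e|] // _; exists (u, e) => //; by rewrite inE E.
Qed.
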